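(* For no choice of a natural number $k$ and nonnegative numbers $p_1,\dots,p_k$ with $p_1+\dots+p_k=1$ does the algorithm MinIndex$(k,p_1,\dots,p_k)$ achieve a guarantee larger than $5/9$ on forests of maximum degree three in the adversarial edge arrival model. That is, for every such parameters and every $\gamma>5/9$ there exists a forest of maximum degree at most three with an edge arrival order and a timepoint $t$ such that $\mathbb{E}[|M|]<\gamma\,\nu(G_t)$, where $M$ is the matching returned by MinIndex at time $t$.
   Context: MinIndex$(k,p_1,\dots,p_k)$: it maintains $k$ matchings $M_1,\dots,M_k$, initially empty. When an edge $e$ arrives: if $M_i\cup\{e\}$ is not a matching for every $i$, $e$ is rejected; otherwise $e$ is added to $M_i$ for the minimal index $i$ such that $M_i\cup\{e\}$ is a matching. At any time, the algorithm's output is the random matching $M$ equal to $M_i$ with probability $p_i$. The guarantee is $\gamma$ if at every timepoint $\mathbb{E}[|M|]\ge\gamma\,\nu(G_t)$, with $\nu(G_t)$ the maximum matching cardinality of the graph of arrived edges $G_t$. *)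

(* Defs.v *)
From HB Require Import structures.
From mathcomp Require Import all_boot all_order all_algebra.
From mathcomp Require Import reals.
Set Implicit Arguments. Unset Strict Implicit. Unset Printing Implicit Defensive.
Import Order.TTheory GRing.Theory Num.Theory.

(* Graphs: vertices are natural numbers, an undirected edge {u,v} is a pair (u,v).
   A graph with an edge arrival order is a sequence s of edges (arrival order =
   order in s); G_t is the graph of the first t edges, [take t s]. *)

Definition edge := (nat * nat)%type.

Definition edge_disj (e f : edge) : bool :=
  [&& e.1 != f.1, e.1 != f.2, e.2 != f.1 & e.2 != f.2].

Definition is_matching (M : seq edge) : bool := pairwise edge_disj M.

Definition simple_graph (s : seq edge) : bool :=
  all (fun e => e.1 != e.2) s &&
  uniq [seq (minn e.1 e.2, maxn e.1 e.2) | e <- s].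

Definition adj (s : seq edge) : rel nat :=
  fun u v => ((u, v) \in s) || ((v, u) \in s).

Definition forest (s : seq edge) : Prop :=
  forall c : seq nat, uniq c -> 2 < size c -> ~~ cycle (adj s) c.

Definition degree (s : seq edge) (v : nat) : nat :=
  count (fun e : edge => (e.1 == v) || (e.2 == v)) s.

Definition max_deg_le (d : nat) (s : seq edge) : Prop :=
  forall v, degree s v <= d.

Definition nu (s : seq edge) : nat :=
  \max_(b : (size s).-tuple bool | is_matching (mask b s)) size (mask b s).

Fixpoint mi_insert (e : edge) (Ms : seq (seq edge)) : seq (seq edge) :=
  match Ms with
  | [::] => [::]
  | M :: Ms' => if is_matching (e :: M) then (e :: M) :: Ms'
                else M :: mi_insert e Ms'
  end.

Definition minindex_run (k : nat) (s : seq edge) : seq (seq edge) :=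
  foldl (fun Ms e => mi_insert e Ms) (nseq k [::]) s.

(* E[|M|] where M = M_i with probability p_i *)
Definition minindex_expected (R : realType) (k : nat) (p : 'I_k -> R)
    (s : seq edge) : R :=
  \sum_(i < k) p i * (size (nth [::] (minindex_run k s) i))%:R.

(* Main.v *)
Require Import Defs.
From HB Require Import structures.
From mathcomp Require Import all_boot all_order all_algebra.
From mathcomp Require Import reals.
From mathcomp Require Import zify.
Import Order.TTheory GRing.Theory Num.Theory.

Definition sh (b : nat) (e : edge) : edge := (e.1 + b, e.2 + b).
Definition P0 : seq edge := [:: (0,1);(0,2);(3,18);(1,3);(4,5);(1,4);(7,8);(6,7);(3,6);(7,9);(8,10);(5,11);(5,12);(11,13);(11,14);(13,15);(16,17)].
Definition bb n := 18 * n + 1.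
Lemma bbS n : bb n.+1 = 18 + bb n. Proof. rewrite /bb; lia. Qed.
Definition blk n := map (sh (bb n)) P0.
Fixpoint S n := match n with 0 => [:: (0,1)] | n'.+1 => S n' ++ blk n' end.
Definition ins (Ms : seq (seq edge)) (e : edge) := mi_insert e Ms.
Definition touch (v : nat) (e : edge) := (e.1 == v) || (e.2 == v).
Definition vb (b : nat) (M : seq edge) := all (fun e : edge => (e.1 <= b) && (e.2 <= b)) M.

Lemma edge_disj_sh b e f : edge_disj (sh b e) (sh b f) = edge_disj e f.
Proof. by rewrite /edge_disj /= !eqn_add2r. Qed.

Lemma sh_inj b : injective (sh b).
Proof. by case=> x y [u v] [] /addIn -> /addIn ->. Qed.
Lemma take_mi_insert e k Ms : take k (mi_insert e Ms) = mi_insert e (take k Ms).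
Proof.
elim: Ms k => [|M Ms IH] k; case: k => [|k] //=; case: ifP => _ //=.
by rewrite IH.
Qed.
Lemma take_fold k s Ms : take k (foldl ins Ms s) = foldl ins (take k Ms) s.
Proof. by elim: s Ms => [|e s IH] Ms //=; rewrite IH /ins take_mi_insert. Qed.
Lemma mi_insert_match e Ms : all is_matching Ms -> all is_matching (mi_insert e Ms).
Proof.
elim: Ms => [|M Ms IH] //= /andP[hM hMs].
by case: ifP => h /=; rewrite ?h ?hMs ?hM ?IH.
Qed.
Lemma fold_match s Ms : all is_matching Ms -> all is_matching (foldl ins Ms s).
Proof. by elim: s Ms => [|e s IH] Ms //= h; apply: IH; apply: mi_insert_match. Qed.
Lemma nseq_match k : all is_matching (nseq k [::] : seq (seq edge)).
Proof. by elim: k. Qed.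
Definition good b (M C : seq edge) :=
  [/\ is_matching M, is_matching C &
      forall f, f \in P0 -> all (edge_disj (sh b f)) M = all (edge_disj f) C].

Fixpoint Rel b (Ms Os Cs COs : seq (seq edge)) : Prop :=
  match Ms, Os, Cs, COs with
  | [::], [::], [::], [::] => True
  | A :: Ms, Q :: Os, C :: Cs, CO :: COs =>
      [/\ exists2 X, all (mem P0) X & (A = map (sh b) X ++ Q /\ C = X ++ CO),
          good b Q CO & Rel b Ms Os Cs COs]
  | _, _, _, _ => False
  end.

Lemma is_matching_cons e L : is_matching (e :: L) = all (edge_disj e) L && is_matching L.
Proof. by []. Qed.

Lemma dec_eq b e X Q CO : e \in P0 -> all (mem P0) X -> good b Q CO ->
  is_matching (sh b e :: map (sh b) X ++ Q) = is_matching (e :: X ++ CO).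
Proof.
move=> eP XP [mO mC hf].
rewrite !is_matching_cons !all_cat /is_matching !pairwise_cat -!/(is_matching _) mO mC.
rewrite all_map (eq_all (a2 := edge_disj e)); last by move=> f /=; rewrite edge_disj_sh.
rewrite hf //.
have -> : is_matching [seq sh b i | i <- X] = is_matching X.
  rewrite /is_matching pairwise_map; apply: eq_pairwise => u v.
  exact: edge_disj_sh.
congr (_ && (_ && _)).
rewrite /allrel all_map; apply: eq_in_all => f fX /=.
by apply: hf; move/allP: XP => /(_ f fX).
Qed.

Lemma ins_sim b e Ms Os Cs COs : e \in P0 -> Rel b Ms Os Cs COs ->
  Rel b (mi_insert (sh b e) Ms) Os (mi_insert e Cs) COs.
Proof.
move=> eP; elim: Ms Os Cs COs => [|A Ms IH] [|Q Os] [|C Cs] [|CO COs] //=.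
case=> [[X XP [-> ->]] g R].
rewrite /= -!is_matching_cons (@dec_eq b e X Q CO eP XP g); case: ifP => _ /=.
  split=> //; exists (e :: X); first by rewrite /= eP.
  by split.
by split=> //; [exists X | apply: IH].
Qed.

Lemma fold_sim b L Ms Os Cs COs : all (mem P0) L -> Rel b Ms Os Cs COs ->
  Rel b (foldl ins Ms (map (sh b) L)) Os (foldl ins Cs L) COs.
Proof.
elim: L Ms Cs => [|e L IH] Ms Cs //= /andP[eP LP] R.
by apply: IH => //; apply: ins_sim.
Qed.

Lemma Rel_refl b Os COs : size Os = size COs ->
  (forall i, i < size Os -> good b (nth [::] Os i) (nth [::] COs i)) -> Rel b Os Os COs COs.
Proof.
elim: Os COs => [|Q Os IH] [|CO COs] //= [sz] h.
split; first by exists [::].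
  by apply: (h 0).
by apply: IH => // i lt; apply: (h i.+1).
Qed.
Lemma disj_gt b g M : vb b M -> b < g.1 -> b < g.2 -> all (edge_disj g) M.
Proof.
move=> /allP h g1 g2; apply/allP => m /h /andP[m1 m2].
rewrite /edge_disj; apply/and4P; split; apply/eqP; lia.
Qed.

Lemma disj_ge b g M : vb b M -> ~~ has (touch b) M -> b <= g.1 -> b <= g.2 -> all (edge_disj g) M.
Proof.
move=> /allP h /hasPn ht g1 g2; apply/allP => m mM.
move: (h m mM) (ht m mM); rewrite /touch negb_or => /andP[m1 m2] /andP[/eqP n1 /eqP n2].
rewrite /edge_disj; apply/and4P; split; apply/eqP; lia.
Qed.

Lemma disj_touch b g M : has (touch b) M -> touch b g -> all (edge_disj g) M = false.
Proof.
case/hasP => m mM tm tg; apply/negbTE/allPn; exists m => //.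
move: tm tg; rewrite /touch /edge_disj.
by case/orP => /eqP ->; case/orP => /eqP ->; rewrite ?eqxx ?andbF.
Qed.

Lemma touch_sh v b f : touch (v + b) (sh b f) = touch v f.
Proof. by rewrite /touch /= !eqn_add2r. Qed.

Lemma P0_19 : all (fun f => (all (edge_disj f) [:: (19,0)] == ~~ touch 0 f)
                          && (0 < f.1 + f.2)) P0.
Proof. by []. Qed.

Lemma good_M1 b M : vb b M -> has (touch b) M -> is_matching M -> good b M [:: (19,0)].
Proof.
move=> hv ht hm; split=> // f fP.
have /andP[/eqP -> _] := allP P0_19 f fP.
case: (boolP (touch 0 f)) => t /=.
  by apply: disj_touch ht _; rewrite -(add0n b) touch_sh.
move: t; rewrite /touch negb_or => /andP[t1 t2].
by apply: disj_gt hv _ _ => /=; lia.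
Qed.

Lemma good_Mi b M : vb b M -> ~~ has (touch b) M -> is_matching M -> good b M [::].
Proof. by move=> hv ht hm; split=> // f fP; apply: disj_ge hv ht _ _ => /=; lia. Qed.

Lemma good_nil b : good b [::] [::].
Proof. by []. Qed.

Lemma Rel_nil b As k : Rel b As (nseq k [::]) (nseq k [::]) (nseq k [::]) -> As = nseq k [::].
Proof.
elim: k As => [|k IH] [|A As] //= [[X _ [-> E]] _ R].
by case: X E => // _; rewrite (IH _ R).
Qed.

Lemma vb_sh c b X : vb c X -> vb (c + b) (map (sh b) X).
Proof. by rewrite /vb all_map; apply: sub_all => e /=; rewrite !leq_add2r. Qed.

Lemma vb_le b b' M : vb b M -> b <= b' -> vb b' M.
Proof. by move=> h le; apply: sub_all h => e /andP[h1 h2]; rewrite !(leq_trans _ le). Qed.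

Lemma has_sh v b X : has (touch (v + b)) (map (sh b) X) = has (touch v) X.
Proof. by rewrite has_map; apply: eq_has => e /=; rewrite touch_sh. Qed.

Lemma notouch b b' M : vb b M -> b < b' -> ~~ has (touch b') M.
Proof.
move=> /allP h lt; apply/hasPn => e /h /andP[e1 e2]; rewrite /touch negb_or.
apply/andP; split; apply/eqP; lia.
Qed.

Definition Cold k : seq (seq edge) := [:: [:: (19,0)], [::], [::], [::] & nseq k [::]].
Definition D1 : seq edge := [:: (16, 17); (11, 13); (7, 8); (4, 5); (3, 18); (19, 0)].
Definition D2 : seq edge := [:: (13, 15); (5, 11); (8, 10); (6, 7); (0, 1)].
Definition D3 : seq edge := [:: (11, 14); (5, 12); (7, 9); (1, 3); (0, 2)].
Definition D4 : seq edge := [:: (3, 6); (1, 4)].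
Lemma Cold_run k : foldl ins (Cold k) P0 = [:: D1, D2, D3, D4 & nseq k [::]].
Proof. reflexivity. Qed.

Lemma ar_sz n : [/\ 5 + (5 * n + 1) = 5 * n.+1 + 1, 5 + 5 * n = 5 * n.+1,
      5 + 5 * n = 5 * n.+1 & 2 + 2 * n = 2 * n.+1].
Proof. by split; lia. Qed.
Lemma vb_cat b X Y : vb b (X ++ Y) = vb b X && vb b Y.
Proof. by rewrite /vb all_cat. Qed.
Lemma ar_lt b : b < 18 + b. Proof. lia. Qed.

Lemma run_shape k n : exists M1 M2 M3 M4,
  foldl ins (nseq k.+4 [::]) (S n) = [:: M1, M2, M3, M4 & nseq k [::]] /\
  [/\ size M1 = 5*n+1, size M2 = 5*n, size M3 = 5*n & size M4 = 2*n] /\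
  [/\ vb (bb n) M1, vb (bb n) M2, vb (bb n) M3 & vb (bb n) M4] /\
  [/\ has (touch (bb n)) M1, ~~ has (touch (bb n)) M2, ~~ has (touch (bb n)) M3
    & ~~ has (touch (bb n)) M4].
Proof.
elim: n => [|n [M1 [M2 [M3 [M4 [E [[s1 s2 s3 s4] [[v1 v2 v3 v4] [t1 t2 t3 t4]]]]]]]]].
  by exists [:: (0,1)], [::], [::], [::]; split=> //.
have mall := @fold_match (S n) _ (nseq_match k.+4); rewrite E /= in mall.
case/and5P: mall => m1 m2 m3 m4 _.
set b := bb n.
set Os := [:: M1, M2, M3, M4 & nseq k [::]].
have R0 : Rel b Os Os (Cold k) (Cold k).
  apply: Rel_refl; first by rewrite /= !size_nseq.
  move=> [|[|[|[|i]]]] _ /=.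
  - exact: good_M1.
  - exact: good_Mi.
  - exact: good_Mi.
  - exact: good_Mi.
  by rewrite !nth_nseq; case: ifP.
have P0P : all (mem P0) P0 by apply/allP.
have := @fold_sim b P0 _ _ _ _ P0P R0; rewrite Cold_run.
have -> : S n.+1 = S n ++ blk n by [].
rewrite foldl_cat E -/Os /blk -/b.
case: (foldl ins Os (map (sh b) P0)) => [|A1 [|A2 [|A3 [|A4 As]]]] //;
  rewrite /Os; try (by case=> _ _ /= []); try (by case=> _ _ [_ _ /= []]); try (by case=> _ _ [_ _ [_ _ /= []]]).
case=> [[X1 _ [-> C1]] _ [[X2 _ [-> C2]] _ [[X3 _ [-> C3]] _ [[X4 _ [-> C4]] _ Rt]]]].
rewrite (@Rel_nil _ _ _ Rt).
have sX1 : size X1 = 5 by move/(congr1 size): C1; rewrite size_cat addn1 /D1 /= => -[->].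
have {C1} -> : X1 = take 5 D1 by rewrite C1 take_size_cat.
rewrite cats0 in C2; rewrite cats0 in C3; rewrite cats0 in C4; rewrite -{}C2 -{}C3 -{}C4.
exists (map (sh b) (take 5 D1) ++ M1), (map (sh b) D2 ++ M2),
       (map (sh b) D3 ++ M3), (map (sh b) D4 ++ M4).
split=> //.
rewrite bbS -/b.
split; first by rewrite !size_cat !size_map s1 s2 s3 s4 /D1 /D2 /D3 /D4 /=; exact: ar_sz.
have lb : b < 18 + b by apply: ar_lt.
have lb' : b <= 18 + b by apply: ltnW.
split.
  by split; rewrite vb_cat; apply/andP; split;
    [apply: vb_sh | apply: vb_le lb'|apply: vb_sh | apply: vb_le lb'|
     apply: vb_sh | apply: vb_le lb'|apply: vb_sh | apply: vb_le lb'].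
split; rewrite has_cat has_sh.
- by [].
- by rewrite (negbTE (notouch _ _ _ v2 lb)) orbF.
- by rewrite (negbTE (notouch _ _ _ v3 lb)) orbF.
- by rewrite (negbTE (notouch _ _ _ v4 lb)) orbF.
Qed.
Lemma match_sh b X : is_matching (map (sh b) X) = is_matching X.
Proof.
rewrite /is_matching pairwise_map; apply: eq_pairwise => u v; exact: edge_disj_sh.
Qed.

Definition vbs (b : nat) (M : seq edge) := all (fun e : edge => (e.1 < b) && (e.2 < b)) M.

Lemma vbs_sh c b X : vbs c X -> vbs (c + b) (map (sh b) X).
Proof. by rewrite /vbs all_map; apply: sub_all => e /=; rewrite !ltn_add2r. Qed.

Lemma vbs_le b b' M : vbs b M -> b <= b' -> vbs b' M.
Proof. by move=> h le; apply: sub_all h => e /andP[h1 h2]; rewrite !(leq_trans _ le). Qed.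

Lemma allrel_sep b L X : vbs b L -> allrel edge_disj L (map (sh b) X).
Proof.
move=> /allP h; apply/allrelP => l q /h /andP[l1 l2] /mapP[x _ ->].
rewrite /edge_disj /=; apply/and4P; split; apply/eqP; lia.
Qed.

Definition B0 : seq bool := [:: false; true; false; false; false; true; false; false; true; true; true; false; true; false; true; true; true].
Fixpoint mb n := match n with 0 => [:: false] | n'.+1 => mb n' ++ B0 end.
Definition Q0 := mask B0 P0.

Lemma size_mb n : size (mb n) = size (S n).
Proof. by elim: n => //= n IH; rewrite !size_cat IH size_map. Qed.

Lemma ar9 n : 9 + 9 * n = 9 * n.+1. Proof. lia. Qed.

Lemma mask_S n : [/\ is_matching (mask (mb n) (S n)), vbs (bb n) (mask (mb n) (S n))
                 & size (mask (mb n) (S n)) = 9 * n].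
Proof.
elim: n => [|n [m v s]]; first by [].
have -> : S n.+1 = S n ++ blk n by [].
rewrite /= mask_cat ?size_mb // /blk -map_mask -/Q0 bbS.
split.
- by rewrite /is_matching pairwise_cat -!/(is_matching _) m match_sh (allrel_sep _ _ _ v).
- rewrite /vbs all_cat -!/(vbs _ _); apply/andP; split.
    by apply: vbs_le v _; apply: ltnW; apply: ar_lt.
  by apply: vbs_sh.
- by rewrite size_cat size_map s /Q0 /= addnC ar9.
Qed.

Lemma nu_ge s (m : seq bool) : size m = size s -> is_matching (mask m s) -> size (mask m s) <= nu s.
Proof.
move=> sz hm; rewrite /nu.
have szb : size m == size s by apply/eqP.
exact: (@leq_bigmax_cond _ (fun b : (size s).-tuple bool => is_matching (mask b s))
          (fun b => size (mask b s)) (Tuple szb) hm).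
Qed.

Lemma nu_S n : 9 * n <= nu (S n).
Proof. by case: (mask_S n) => m _ s; rewrite -s; apply: nu_ge => //; apply: size_mb. Qed.
Lemma ar_le n : 5 * n <= 5 * n + 1. Proof. lia. Qed.
Lemma ar_le2 n : 2 * n <= 5 * n + 1. Proof. lia. Qed.
Lemma ar_k4 k : k <= k.+4. Proof. lia. Qed.
Lemma size_nth_run k n (i : nat) : i < k -> size (nth [::] (minindex_run k (S n)) i) <= 5 * n + 1.
Proof.
move=> ik.
have [M1 [M2 [M3 [M4 [E [[s1 s2 s3 s4] _]]]]]] := run_shape k n.
have -> : minindex_run k (S n) = take k (foldl ins (nseq k.+4 [::]) (S n)).
  by rewrite take_fold take_nseq ?ar_k4.
rewrite nth_take // E.
case: i ik => [|[|[|[|i]]]] _ /=; rewrite ?s1 ?s2 ?s3 ?s4 //; try by [apply: ar_le | apply: ar_le2].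
by elim: (k) i {E} => [|k' IH] [|i] //=.
Qed.

Local Open Scope ring_scope.
Lemma exp_bound (R : realType) k (p : 'I_k -> R) n : (forall i, 0 <= p i) -> \sum_(i < k) p i = 1 ->
  minindex_expected p (S n) <= (5 * n + 1)%:R.
Proof.
move=> p0 p1; rewrite /minindex_expected.
apply: (@le_trans _ _ (\sum_(i < k) p i * (5 * n + 1)%:R)).
  apply: ler_sum => i _; apply: ler_wpM2l => //; rewrite ler_nat.
  exact: size_nth_run.
by rewrite -mulr_suml p1 mul1r.
Qed.
Local Close Scope ring_scope.
Lemma count_sh_lt v b X : v < b -> count (touch v) (map (sh b) X) = 0.
Proof.
move=> lt; apply/eqP; rewrite -leqn0 leqNgt -has_count; apply/hasPn => e /mapP[x _ ->].
rewrite /touch negb_or /=; apply/andP; split; apply/eqP; lia.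
Qed.

Lemma count_sh_ge v b X : b <= v -> count (touch v) (map (sh b) X) = count (touch (v - b)) X.
Proof.
move=> le; rewrite count_map; apply: eq_count => x /=.
by rewrite -{1}(subnK le) touch_sh.
Qed.

Lemma count_old v b M : vb b M -> b < v -> count (touch v) M = 0.
Proof.
move=> h lt; apply/eqP; rewrite -leqn0 leqNgt -has_count.
exact: notouch h lt.
Qed.

Lemma P0_deg w : count (touch w) P0 <= 3.
Proof.
case: (ltnP w 19) => h.
  have : all (fun w => count (touch w) P0 <= 3) (iota 0 19) by [].
  by move/allP => /(_ w); rewrite mem_iota /=; apply.
have vP : vb 18 P0 by [].
by rewrite (count_old _ _ _ vP).
Qed.

Lemma deg_S n : [/\ forall v, count (touch v) (S n) <= 3, count (touch (bb n)) (S n) = 1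
                  & vb (bb n) (S n)].
Proof.
elim: n => [|n [d1 d2 d3]].
  split=> //; move=> v; rewrite /= /touch /=; by case: (0 == v); case: (1 == v).
have -> : S n.+1 = S n ++ blk n by [].
rewrite /blk bbS; set b := bb n.
have vP : vb 18 P0 by [].
split.
- move=> v; rewrite count_cat.
  case: (ltnP v b) => h; first by rewrite count_sh_lt // addn0.
  rewrite count_sh_ge //.
  case: (ltngtP v b) => h'.
  + by move: h; rewrite leqNgt h'.
  + by rewrite (count_old _ _ _ d3 h') add0n P0_deg.
  + by rewrite h' subnn d2.
- rewrite count_cat count_sh_ge; last by apply: ltnW; apply: ar_lt.
  by rewrite (count_old _ _ _ d3 (ar_lt b)) addnK.
- rewrite vb_cat; apply/andP; split; first by apply: vb_le d3 _; apply: ltnW; apply: ar_lt.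
  exact: vb_sh.
Qed.

Lemma maxdeg_S n : max_deg_le 3 (S n).
Proof. by case: (deg_S n) => d _ _ v; apply: d. Qed.
Definition nrm (e : edge) : edge := (minn e.1 e.2, maxn e.1 e.2).

Lemma nrm_sh b e : nrm (sh b e) = sh b (nrm e).
Proof. by rewrite /nrm /sh /= -addn_minl -addn_maxl. Qed.

Lemma P0_pos : all (fun e : edge => 0 < e.1 + e.2) P0. Proof. by []. Qed.

Lemma ar_nrm (x y u v b : nat) : minn x y + b = minn u v -> maxn x y + b = maxn u v -> u <= b -> v <= b -> 0 < x + y -> False.
Proof. lia. Qed.

Lemma simple_S n : simple_graph (S n).
Proof.
elim: n => [|n IH]; first by [].
case: (deg_S n) => _ _ vS.
have -> : S n.+1 = S n ++ blk n by [].
move: IH; rewrite /simple_graph /blk; set b := bb n.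
case/andP=> l u.
rewrite all_cat l andTb.
apply/andP; split; first by rewrite all_map /= !eqn_add2r.
rewrite map_cat cat_uniq u andTb.
have -> : [seq (minn e.1 e.2, maxn e.1 e.2) | e <- map (sh b) P0] = map (sh b) (map nrm P0).
  by elim: P0 => //= e L ->; congr (_ :: _); exact: nrm_sh.
rewrite (map_inj_uniq (sh_inj b)) andbT.
apply/hasPn => q /mapP[x /mapP[e eP ->] ->]; apply/negP => /mapP[f fS].
rewrite /nrm /sh /= => -[eq1 eq2].
move/allP: vS => /(_ f fS) /andP[f1 f2].
have := allP P0_pos e eP.
move=> pos.
exact: (@ar_nrm _ _ _ _ _ eq1 eq2 f1 f2 pos).
Qed.
Lemma forest_nil : forest [::].
Proof. by move=> [|x [|z c]] //= _ _; rewrite /adj !in_nil. Qed.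

Lemma forest_perm s1 s2 : perm_eq s1 s2 -> forest s1 -> forest s2.
Proof.
move=> pe F c Uc Sc; rewrite -(eq_cycle (e := adj s1)) ?F // => u v.
by rewrite /adj !(perm_mem pe).
Qed.

Lemma forest_cons x y s : forest s -> x != y -> ~~ has (touch y) s -> forest ((x,y) :: s).
Proof.
move=> Fs xy ny c Uc Sc; apply/negP => Cc.
have ny' : forall u v, (u,v) \in s -> (u != y) && (v != y).
  by move=> u v uv; move/hasPn: ny => /(_ _ uv); rewrite /touch negb_or.
have adjy : forall z, adj ((x,y)::s) y z || adj ((x,y)::s) z y -> z = x.
  move=> z h; have [//|zx] := eqVneq z x; exfalso; move: h.
  rewrite /adj !in_cons !xpair_eqE (eq_sym y x) (negbTE xy) (negbTE zx) /=.
  by case/orP=> /orP[] /ny' /andP[]; rewrite eqxx.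
case: (boolP (y \in c)) => yc.
  case/rot_to: yc => i c' Ec.
  have Cc' : cycle (adj ((x,y)::s)) (y :: c') by rewrite -Ec rot_cycle.
  have Uc' : uniq (y :: c') by rewrite -Ec rot_uniq.
  have Sc' : 2 < size (y :: c') by rewrite -Ec size_rot.
  clear Ec; case: c' Cc' Uc' Sc' => [|z1 [|z2 w]] // Cc' Uc' _.
  move: Cc'; rewrite /cycle rcons_path => /andP[/= /andP[a1 _] a2].
  have e1 : z1 = x by apply: adjy; rewrite a1.
  have e2 : last z2 w = x by apply: adjy; rewrite a2 orbT.
  move: Uc'; rewrite /= => /and3P[_ /negP nz _]; apply: nz.
  by rewrite e1 -e2 mem_last.
apply: (negP (Fs c Uc Sc)).
apply: (@sub_in_cycle _ (predC1 y) (adj ((x,y)::s))) Cc.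
  move=> u v; rewrite !inE => uy vy.
  by rewrite /adj !in_cons !xpair_eqE (negbTE vy) (negbTE uy) !andbF.
by apply/allP => v vc; rewrite inE; apply: contraNneq yc => <-.
Qed.

Fixpoint fresh_ok (L s : seq edge) : bool :=
  match L with
  | [::] => true
  | e :: L' => [&& e.1 != e.2, ~~ has (touch e.2) (L' ++ s) & fresh_ok L' s]
  end.

Lemma forest_fresh L s : forest s -> fresh_ok L s -> forest (L ++ s).
Proof.
elim: L => [|[x y] L IH] //= Fs /and3P[xy ny fL].
by apply: forest_cons => //; apply: IH.
Qed.

Lemma fresh_sh L s b : fresh_ok L [::] -> all (fun e : edge => 0 < e.2) L -> vb b s ->
  fresh_ok (map (sh b) L) s.
Proof.
move=> + + vs; elim: L => [|e L IH] //= /and3P[e12 ne fL] /andP[e2 pL].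
rewrite eqn_add2r e12 IH // andbT has_cat has_sh -(cats0 L) (negbTE ne) /=.
by rewrite (negbTE (notouch _ _ _ vs _)) //; rewrite -{1}(add0n b) ltn_add2r.
Qed.

Definition F0 : seq edge := [:: (0,1);(0,2);(1,3);(3,18);(1,4);(4,5);(3,6);(6,7);(7,8);(7,9);(8,10);(5,11);(5,12);(11,13);(11,14);(13,15);(16,17)].

Lemma forest_S n : forest (S n).
Proof.
elim: n => [|n IH].
  by have := @forest_fresh [:: (0,1)] [::] forest_nil; rewrite cats0; apply.
case: (deg_S n) => _ _ vS.
have -> : S n.+1 = S n ++ blk n by [].
apply: (@forest_perm (map (sh (bb n)) (rev F0) ++ S n)).
  rewrite perm_sym perm_catC; apply: perm_cat => //.
  by apply: perm_map.
by apply: forest_fresh => //; apply: fresh_sh.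
Qed.
From mathcomp Require Import lra.
Local Open Scope ring_scope.

Theorem mainTheorem4 (R : realType) (k : nat) (p : 'I_k -> R) :
  (forall i, 0 <= p i) -> \sum_(i < k) p i = 1 ->
  forall gamma : R, 5 / 9 < gamma ->
  exists (s : seq edge) (t : nat),
    [/\ simple_graph s, forest s, max_deg_le 3 s, (t <= size s)%N &
        minindex_expected p (take t s) < gamma * (nu (take t s))%:R].
Proof.
move=> p0 p1 g hg.
set d := 9 * g - 5.
have d0 : 0 < d by rewrite /d; lra.
set n := (Num.Def.trunc (1 / d)).+1.
have hn : 1 / d < n%:R by apply: truncnS_gt.
have hn' : 1 < n%:R * d by rewrite -ltr_pdivrMr.
exists (S n), (size (S n)); rewrite take_size; split.
- exact: simple_S.
- exact: forest_S.
- exact: maxdeg_S.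
- by [].
apply: (le_lt_trans (@exp_bound R k p n p0 p1)).
have g0 : 0 < g by lra.
apply: (@lt_le_trans _ _ (g * (9 * n)%:R)).
  rewrite !natrD !natrM /=.
  move: hn'; rewrite /d; nra.
by rewrite ler_pM2l // ler_nat nu_S.
Qed.
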